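(* Let $\epsilon>0$ and let $u,\hat u:\mathbf{S}\to\mathbb{R}^{|P|}$ be two utility functions on the same finite game structure. Suppose that for all $(p,s)\in\mathcal{I}$, $|u_p(s)-\hat u_p(s)|\le\max\{\epsilon,\ \mathrm{Reg}_p(s;\hat u)/2\}$. Then for all $(p,s)\in\mathcal{I}$ with $\mathrm{Reg}_p(s;u)=0$, it holds that $|u_p(s)-\hat u_p(s)|\le\epsilon$.
   Context: A finite normal-form game structure: finite player set $P$, finite pure strategy sets $S_p$, $\mathbf{S}=\prod_pS_p$, index set $\mathcal{I}=P\times\mathbf{S}$. For a utility function $u$, pure profile $s$ and player $p$, $A_{p,s}$ is the set of pure profiles obtained from $s$ by replacing $p$'s strategy by any $t\in S_p$, and $\mathrm{Reg}_p(s;u)=\sup_{s'\in A_{p,s}}u_p(s')-u_p(s)$. *)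

(* Defs.v *)
From HB Require Import structures.
From mathcomp Require Import all_boot all_order all_algebra.
Set Implicit Arguments. Unset Strict Implicit. Unset Printing Implicit Defensive.
Import Order.TTheory GRing.Theory Num.Theory.
Local Open Scope ring_scope.

Definition profile (P : finType) (S : P -> finType) := {dffun forall p : P, S p}.

Definition deviate (P : finType) (S : P -> finType) (s : profile S) (p : P)
  (t : S p) : profile S :=
  [ffun q => match p =P q with
             | ReflectT e => eq_rect p (fun q => S q) t q e
             | ReflectF _ => s q end].

(* Reg_p(s;u) = sup_{s' in A_{p,s}} u_p(s') - u_p(s). A_{p,s} is finite and
   nonempty (it contains s), so the sup is a finite max; we seed the max with
   u_p(s), which is itself an element of the set (t = s p). *)
Definition Reg (R : realDomainType) (P : finType) (S : P -> finType)
  (u : profile S -> P -> R) (p : P) (s : profile S) : R :=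
  \big[Num.max/u s p]_(t : S p) u (deviate s t) p - u s p.

(* Main.v *)
Require Import Defs.
From HB Require Import structures.
From mathcomp Require Import all_boot all_order all_algebra.
From mathcomp Require Import lra.
Import Order.TTheory GRing.Theory Num.Theory.
Local Open Scope ring_scope.

Lemma deviate_id (P : finType) (S : P -> finType) (s : profile S) (p : P) :
  deviate s (s p) = s.
Proof.
apply/ffunP => q; rewrite /deviate ffunE.
by case: (p =P q) => [e|//]; subst.
Qed.

Lemma deviate_dev (P : finType) (S : P -> finType) (s : profile S) (p : P)
  (t t' : S p) : deviate (deviate s t) t' = deviate s t'.
Proof.
apply/ffunP => q; rewrite /deviate !ffunE.
by case: (p =P q) => [e|//].
Qed.

Section M.
Variables (R : realDomainType) (P : finType) (S : P -> finType).

Lemma bigmax_ub (I : finType) (x : R) (F : I -> R) (i : I) :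
  F i <= \big[Num.max/x]_(j : I) F j.
Proof. by rewrite (bigD1 i) //= le_max lexx. Qed.

Lemma bigmax_lub (I : finType) (x y : R) (F : I -> R) :
  x <= y -> (forall i, F i <= y) -> \big[Num.max/x]_(j : I) F j <= y.
Proof.
move=> hx hF; elim/big_ind: _ => // a b ha hb.
by rewrite ge_max ha hb.
Qed.

Lemma bigmax_ex (u : profile S -> P -> R) (p : P) (s : profile S) :
  exists t : S p, \big[Num.max/u s p]_(t : S p) u (deviate s t) p = u (deviate s t) p.
Proof.
elim/big_ind: _.
- by exists (s p); rewrite deviate_id.
- move=> a b [ta ha] [tb hb]; case: (leP a b) => _.
  + by exists tb.
  + by exists ta.
- by move=> i _; exists i.
Qed.
End M.

Theorem lemma4 (R : realFieldType) (P : finType) (S : P -> finType)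
  (eps : R) (heps : 0 < eps) (u uh : profile S -> P -> R) :
  (forall (p : P) (s : profile S),
      `|u s p - uh s p| <= Num.max eps (Reg uh p s / 2)) ->
  forall (p : P) (s : profile S), Reg u p s = 0 -> `|u s p - uh s p| <= eps.
Proof.
move=> H p s hR.
have [t0 ht0] := @bigmax_ex R P S uh p s.
set s' := deviate s t0.
have hu : u s' p <= u s p.
  have := @bigmax_ub R _ (u s p) (fun t => u (deviate s t) p) t0.
  by move: hR; rewrite /Reg => /eqP; rewrite subr_eq0 => /eqP ->.
have hR' : Reg uh p s' <= 0.
  rewrite /Reg subr_le0; apply: (@bigmax_lub R) => // t.
  rewrite /s' deviate_dev -ht0.
  exact: (@bigmax_ub R _ (uh s p) (fun t => uh (deviate s t) p)).
have hs' : `|u s' p - uh s' p| <= eps.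
  have := H p s'; rewrite max_l //.
  apply: le_trans (ltW heps); move: hR'; clear; move=> h; lra.
have := H p s; rewrite /Reg ht0 -/s' /Num.max.
move: hs'; rewrite !ler_norml => /andP[h1 h2].
case: ifP => hc /andP[h3 h4]; apply/andP; split; lra.
Qed.
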